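(* Let $G$ be a finite, simple, connected graph of order $n$ which contains a cycle. If $\beta(G)=n-g(G)+2$, then $G$ has no cut vertex (i.e., $G$ is $2$-connected).
   Context: For vertices $x,y$ of a connected graph $G$, $d(x,y)$ denotes the length of a shortest $x$–$y$ path. A set $W\subseteq V(G)$ is a resolving set for $G$ if for every two distinct vertices $u,v\in V(G)$ there exists $w\in W$ with $d(u,w)\neq d(v,w)$. The metric dimension $\beta(G)$ is the minimum cardinality of a resolving set. The girth $g(G)$ is the length of a shortest cycle of $G$. A vertex $v$ is a cut vertex if $G\setminus\{v\}$ has at least two connected components. *)

(* Defs.v *)
From mathcomp Require Import all_boot.
Set Implicit Arguments. Unset Strict Implicit. Unset Printing Implicit Defensive.

Section Graphs.
Variables (T : finType) (e : rel T).

Definition simple_graph : Prop := symmetric e /\ irreflexive e.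

Definition connected_graph : Prop := forall x y : T, connect e x y.

Definition walk_of_len (k : nat) (x y : T) : bool :=
  [exists p : k.-tuple T, path e x p && (last x p == y)].

(* In a graph on n vertices a shortest path has < n edges; if y is not
   reachable from x the value defaults to n (irrelevant for connected graphs). *)
Definition dist (x y : T) : nat :=
  \big[minn/#|T|]_(k < #|T| | walk_of_len k x y) k.

Definition resolving (W : {set T}) : bool :=
  [forall u : T, forall v : T,
     (u != v) ==> [exists w in W, dist u w != dist v w]].

Definition metric_dim : nat :=
  \big[minn/#|T|]_(W : {set T} | resolving W) #|W|.

Definition cycle_of_len (k : nat) : bool :=
  [exists c : k.-tuple T, [&& 3 <= k, uniq c & cycle e c]].

Definition has_cycle : Prop := exists k, cycle_of_len k.

Definition girth : nat :=
  \big[minn/#|T|.+1]_(k < #|T|.+1 | cycle_of_len k) k.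

Definition cut_vertex (v : T) : Prop :=
  exists x y : T, [/\ x != v, y != v &
    ~~ connect [rel a b | [&& e a b, a != v & b != v]] x y].

End Graphs.

(* Main.v *)
Require Import Defs.
From mathcomp Require Import all_boot zify.
Set Implicit Arguments. Unset Strict Implicit. Unset Printing Implicit Defensive.

Lemma bigmin_le (I : finType) (P : pred I) (F : I -> nat) d i :
  P i -> \big[minn/d]_(j | P j) F j <= F i.
Proof.
move=> Pi; have : i \in index_enum I by rewrite mem_index_enum.
elim: (index_enum I) => [//|a r IH]; rewrite inE big_cons.
case/orP => [/eqP <-|Hr]; first by rewrite Pi geq_minl.
case: (P a); last exact: IH.
by rewrite geq_min IH ?orbT.
Qed.

Lemma bigmin_attained (I : finType) (P : pred I) (F : I -> nat) d :
  (exists i, P i) -> (forall i, P i -> F i <= d) ->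
  exists2 i, P i & \big[minn/d]_(j | P j) F j = F i.
Proof.
move=> [i0 Pi0] Hd.
have : (\big[minn/d]_(j | P j) F j == d) || [exists i, P i && (\big[minn/d]_(j | P j) F j == F i)].
  apply: (big_ind (fun x => (x == d) || [exists i, P i && (x == F i)])).
  - by rewrite eqxx.
  - move=> x y Hx Hy; rewrite /minn; case: (ltnP x y) => Hxy //.
  - by move=> i Pi; apply/orP; right; apply/existsP; exists i; rewrite Pi eqxx.
case/orP => [/eqP Hm | /existsP [i /andP [Pi /eqP Hm]]]; last by exists i.
exists i0 => //; apply/eqP; rewrite eqn_leq bigmin_le //=.
by rewrite Hm Hd.
Qed.

Lemma uniq_size_lt (T : finType) (x : T) p : uniq (x :: p) -> size p < #|T|.
Proof. by move/card_uniqP => H; rewrite -ltnS -[(size p).+1]/(size (x :: p)) -H ltnS max_card. Qed.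

Section Dist.
Variables (T : finType) (e : rel T).
Hypothesis esym : symmetric e.
Hypothesis econ : connected_graph e.

Lemma walkP k x y : reflect (exists p, [/\ size p = k, path e x p & last x p = y])
   (walk_of_len e k x y).
Proof.
apply: (iffP existsP) => [[p /andP [Hp /eqP Hl]] | [p [Hs Hp Hl]]].
  by exists (val p); rewrite size_tuple.
have Hs' : size p == k by rewrite Hs.
by exists (Tuple Hs'); rewrite /= Hp Hl eqxx.
Qed.

Lemma shorten_ex x p : path e x p ->
  exists p', [/\ path e x p', uniq (x :: p'), last x p' = last x p & size p' <= size p].
Proof.
move=> Hp; case: (shortenP Hp) => p' Hp' Hu Hs.
exists p'; split => //.
by apply: uniq_leq_size => //; case/andP: Hu.
Qed.

Lemma dist_le x y p : path e x p -> last x p = y -> dist e x y <= size p.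
Proof.
move=> Hp Hl; have [p' [Hp' Hu Hl' Hs]] := shorten_ex Hp.
apply: leq_trans Hs.
have Hlt := uniq_size_lt Hu.
have := @bigmin_le _ (fun k : 'I_#|T| => walk_of_len e k x y) (fun k => val k) #|T| (Ordinal Hlt).
apply => /=; apply/walkP; exists p'; split => //; by rewrite Hl' Hl.
Qed.

Lemma dist_path x y : exists p, [/\ path e x p, last x p = y, uniq (x :: p) & size p = dist e x y].
Proof.
have [p Hp Hl] := connectP (econ x y).
have [p' [Hp' Hu Hl' Hs]] := shorten_ex Hp.
have Hlt := uniq_size_lt Hu.
have [k Hk Hd] : exists2 k : 'I_#|T|, walk_of_len e k x y & dist e x y = k.
  apply: bigmin_attained; last by move=> i _; apply: ltnW.
  exists (Ordinal Hlt); apply/walkP; exists p'; split => //; by rewrite Hl'.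
case/walkP: Hk => q [Hq1 Hq2 Hq3].
have [q' [Hq'1 Hq'2 Hq'3 Hq'4]] := shorten_ex Hq2.
exists q'; split => //; first by rewrite Hq'3.
apply/eqP; rewrite eqn_leq Hd -{1}Hq1 Hq'4 /=.
by rewrite -Hd; apply: dist_le => //; rewrite Hq'3.
Qed.

Lemma dist_lt x y : dist e x y < #|T|.
Proof. by have [p [_ _ Hu <-]] := dist_path x y; apply: uniq_size_lt Hu. Qed.

Lemma dist0 x y : dist e x y = 0 -> x = y.
Proof. by have [p [_ Hl _ Hs]] := dist_path x y; rewrite -Hs; case: p Hl Hs. Qed.

Lemma dist_xx x : dist e x x = 0.
Proof. by apply/eqP; rewrite -leqn0 (@dist_le x x [::]). Qed.

Lemma dist_edge x y : e x y -> dist e x y <= 1.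
Proof. by move=> H; apply: (@dist_le x y [:: y]) => //=; rewrite H. Qed.

Lemma dist_tri x y z : dist e x z <= dist e x y + dist e y z.
Proof.
have [p [Hp Hl _ Hs]] := dist_path x y.
have [q [Hq Hl' _ Hs']] := dist_path y z.
rewrite -Hs -Hs' -size_cat; apply: dist_le.
  by rewrite cat_path Hp Hl Hq.
by rewrite last_cat Hl.
Qed.

Lemma dist_sym x y : dist e x y = dist e y x.
Proof.
suff H : forall x y, dist e x y <= dist e y x by apply/eqP; rewrite eqn_leq !H.
move=> a b; have [p [Hp Hl _ Hs]] := dist_path b a.
rewrite -Hs -(size_belast b p) -(size_rev (belast b p)); apply: dist_le; last first.
  by case: p {Hp Hs} Hl => //= c p <-; rewrite rev_cons last_rcons.
rewrite -Hl rev_path.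
by apply: sub_path Hp => u v; rewrite esym.
Qed.

End Dist.

Section Cyc.
Variables (T : finType) (e : rel T).
Hypothesis esym : symmetric e.
Hypothesis eirr : irreflexive e.
Variables (x0 : T) (c : seq T).
Hypothesis cuniq : uniq c.
Hypothesis ccyc : cycle e c.
Hypothesis cge3 : 3 <= size c.
Hypothesis cmin : forall k, cycle_of_len e k -> size c <= k.

Notation g := (size c).

Definition pos n := if n < g then n else n - g.
Definition F n := nth x0 c (pos n).

Lemma pos_small i : i < g -> pos i = i.
Proof. by rewrite /pos => ->. Qed.

Lemma Fi i : i < g -> F i = nth x0 c i.
Proof. by move=> H; rewrite /F pos_small. Qed.

Lemma pos_lt n : n < g + g -> pos n < g.
Proof. move=> H; rewrite /pos; case: (ltnP n g) => //; lia. Qed.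

Lemma F_inj n m : n < g + g -> m < g + g -> F n = F m -> pos n = pos m.
Proof.
move=> Hn Hm H; apply/eqP; rewrite -(nth_uniq x0 (pos_lt Hn) (pos_lt Hm) cuniq).
by apply/eqP.
Qed.

Lemma F_in n : F n \in c.
Proof.
rewrite /F; case: (ltnP (pos n) g) => H; first exact: mem_nth.
rewrite nth_default //.
Abort.

Lemma edge_nth i : i.+1 < g -> e (nth x0 c i) (nth x0 c i.+1).
Proof.
move=> H; move: ccyc; rewrite (cycle_path x0) => /(pathP x0) /(_ i.+1 H) /=.
done.
Qed.

Lemma edge_last : e (nth x0 c g.-1) (nth x0 c 0).
Proof.
move: ccyc; rewrite (cycle_path x0) => /(pathP x0) /(_ 0).
rewrite /= nth_last; apply; lia.
Qed.

Lemma F_edge n : n.+1 < g + g -> e (F n) (F n.+1).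
Proof.
move=> H; rewrite /F /pos.
case: (ltnP n.+1 g) => H1.
  by rewrite ltnW //; apply: edge_nth.
case: (ltnP n g) => H2.
  have -> : n = g.-1 by lia.
  have -> : g.-1.+1 - g = 0 by lia.
  exact: edge_last.
have -> : n.+1 - g = (n - g).+1 by lia.
apply: edge_nth; lia.
Qed.

Definition fwd i j := if i <= j then j - i else j + g - i.
Definition adist (i j : nat) := (i - j) + (j - i).
Definition dC i j := minn (adist i j) (g - adist i j).

Lemma dC_fwd i j : i < g -> j < g -> dC i j = minn (fwd i j) (fwd j i).
Proof.
move=> Hi Hj; rewrite /dC /fwd /adist.
case: (leqP i j) => H1; case: (leqP j i) => H2; lia.
Qed.

Lemma pos_fwd i j : i < g -> j < g -> pos (i + fwd i j) = j.
Proof.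
move=> Hi Hj; rewrite /pos /fwd; case: (leqP i j) => H1.
  have -> : i + (j - i) = j by lia. by rewrite Hj.
have -> : i + (j + g - i) = j + g by lia.
case: (ltnP (j + g) g) => H2; lia.
Qed.

Lemma fwd_lt i j : i < g -> j < g -> fwd i j < g.
Proof. move=> Hi Hj; rewrite /fwd; case: (leqP i j) => H; lia. Qed.

Definition arcs a L := [seq F (a + l) | l <- iota 1 L].

Lemma arcs_path a L : a + L < g + g -> path e (F a) (arcs a L).
Proof.
elim: L a => [//|L IH] a H.
rewrite /arcs /= addn1; apply/andP; split; first by apply: F_edge; lia.
have := IH a.+1 ltac:(lia); rewrite /arcs.
congr (path e _ _).
rewrite -[2]/(1 + 1) iotaDl -map_comp; apply: eq_map => l /=; congr F; lia.
Qed.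

Lemma arcs_last a L : last (F a) (arcs a L) = F (a + L).
Proof.
elim: L a => [|L IH] a; first by rewrite addn0.
rewrite /arcs /= addn1.
have := IH a.+1; rewrite /arcs.
have -> : [seq F (a + l) | l <- iota 2 L] = [seq F (a.+1 + l) | l <- iota 1 L].
  rewrite -[2]/(1 + 1) iotaDl -map_comp; apply: eq_map => l /=; congr F; lia.
move=> ->; congr F; lia.
Qed.

Lemma size_arcs a L : size (arcs a L) = L.
Proof. by rewrite size_map size_iota. Qed.

Definition arc a L := [seq F (a + l) | l <- iota 0 L.+1].

Lemma arcE a L : arc a L = F a :: arcs a L.
Proof. by rewrite /arc /arcs /= addn0. Qed.

Lemma arc_uniq a L : a < g -> L < g -> uniq (arc a L).
Proof.
move=> Ha HL; rewrite map_inj_in_uniq ?iota_uniq // => l1 l2.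
rewrite !mem_iota /= => H1 H2 /F_inj.
rewrite /pos; case: (ltnP (a + l1) g); case: (ltnP (a + l2) g); lia.
Qed.

Lemma arc_sub a L : a < g -> L < g -> {subset arc a L <= c}.
Proof.
move=> Ha HL y /mapP [l]; rewrite mem_iota => Hl ->.
by rewrite /F mem_nth // pos_lt //; lia.
Qed.

Lemma mkcycle a L I : a < g -> L < g ->
  path e (F (a + L)) (rcons I (F a)) -> uniq I -> (forall y, y \in I -> y \notin c) ->
  3 <= L.+1 + size I -> cycle_of_len e (L.+1 + size I).
Proof.
move=> Ha HL Hp Hu Hd H3.
set s := arc a L ++ I.
have Hs : size s == L.+1 + size I by rewrite size_cat /arc size_map size_iota.
have Hus : uniq s.
  rewrite /s cat_uniq arc_uniq // Hu andbT /=; apply/hasPn => y /Hd Hy.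
  by apply/negP => /(arc_sub Ha HL); rewrite (negPf Hy).
have Hcs : cycle e s.
  rewrite /s arcE /= rcons_cat cat_path arcs_path; last by lia.
  by rewrite arcs_last.
by apply/existsP; exists (Tuple Hs); apply/and3P; split.
Qed.

Lemma dC_tri i j k : i < g -> j < g -> k < g -> dC i k <= dC i j + dC j k.
Proof.
move=> Hi Hj Hk; rewrite /dC /adist.
case: (leqP i j) => H1; case: (leqP j k) => H2; case: (leqP i k) => H3; lia.
Qed.

Lemma F_fwd i j : i < g -> j < g -> F (i + fwd i j) = F j.
Proof. by move=> Hi Hj; rewrite /F pos_fwd // pos_small. Qed.

Lemma dC_double q r : dC q r + dC q r <= g.
Proof.
rewrite /dC; case: (leqP (adist q r) (g - adist q r)) => H; lia.
Qed.

Lemma fwd_sum q r : q < g -> r < g -> q != r -> fwd q r + fwd r q = g.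
Proof. move=> Hq Hr /eqP Hne; rewrite /fwd; case: (leqP q r) => H1; case: (leqP r q) => H2; lia. Qed.

Lemma fwd_qq q : fwd q q = 0.
Proof. by rewrite /fwd leqnn subnn. Qed.

Lemma dC_qq q : dC q q = 0.
Proof. by rewrite /dC /adist subnn addn0 min0n. Qed.

Lemma lower n : forall q r P, size P = n -> q < g -> r < g -> path e (F q) P ->
  last (F q) P = F r -> uniq (F q :: P) -> dC q r <= n.
Proof.
elim/ltn_ind: n => n IH q r P Hs Hq Hr Hp Hl Hu.
have [Pnil|Pne] := eqVneq P [::].
  subst P; move: Hl => /= Hl.
  have Hqr : q = r.
    by have := @F_inj q r ltac:(lia) ltac:(lia) Hl; rewrite !pos_small.
  by subst r; rewrite dC_qq.
have Hhas : has (mem c) P.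
  apply/hasP; exists (last (F q) P); last by rewrite /= Hl /F mem_nth // pos_lt //; lia.
  by case: P Pne {Hs Hp Hl Hu} => //= y P _; apply: mem_last.
set t := find (mem c) P.
have Ht : t < size P by rewrite -has_find.
set y := nth x0 P t.
have Hy : y \in c by apply: (nth_find x0 Hhas).
set r' := index y c.
have Hr' : r' < g by rewrite index_mem.
have HFy : F r' = y by rewrite Fi // nth_index.
have HuP : uniq P by case/andP: Hu.
have Htake : path e (F q) (rcons (take t P) y) by rewrite /y -take_nth // take_path.
have HI : forall z, z \in take t P -> z \notin c.
  move=> z /(nthP x0) [i Hi <-]; rewrite nth_take; last by move: Hi; rewrite size_take; case: ifP; lia.
  have Hit : i < t by move: Hi; rewrite size_take; case: ifP; lia.
  by have := before_find x0 Hit; rewrite /= => ->.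
have Hst : size (take t P) = t by rewrite size_take Ht.
have HuI : uniq (take t P) by apply: take_uniq.
case: (ltnP t.+1 (dC q r')) => Hcase.
  exfalso; move: Hcase; rewrite dC_fwd // => Hcase.
  have Hfq : fwd q r' < g by apply: fwd_lt.
  have Hfr : fwd r' q < g by apply: fwd_lt.
  have Hne : q != r' by apply/eqP => Hqr; move: Hcase; rewrite -Hqr fwd_qq.
  have Hsum := fwd_sum Hq Hr' Hne.
  case: (leqP (fwd q r') (fwd r' q)) => Hmin.
    move: Hcase; rewrite (minn_idPl Hmin) => Hcase.
    have Hc := @mkcycle q (fwd q r') (rev (take t P)) Hq Hfq.
    have : cycle_of_len e ((fwd q r').+1 + size (rev (take t P))).
      apply: Hc.
      - rewrite F_fwd // HFy.
        have := Htake; rewrite -rev_path belast_rcons last_rcons rev_cons => H.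
        by apply: sub_path H => u v; rewrite esym.
      - by rewrite rev_uniq.
      - by move=> z; rewrite mem_rev; apply: HI.
      - rewrite size_rev Hst; clear -Hcase; lia.
    move/cmin; rewrite size_rev Hst => Hg; clear -Hg Hcase Hmin Hsum; lia.
  move: Hcase; rewrite (minn_idPr (ltnW Hmin)) => Hcase.
  have Hc := @mkcycle r' (fwd r' q) (take t P) Hr' Hfr.
  have : cycle_of_len e ((fwd r' q).+1 + size (take t P)).
    apply: Hc => //.
    - by rewrite F_fwd // HFy.
    - rewrite Hst; clear -Hcase; lia.
  move/cmin; rewrite Hst => Hg; clear -Hg Hcase Hmin Hsum; lia.
set Q := drop t.+1 P.
have HP : P = take t.+1 P ++ Q by rewrite cat_take_drop.
have Hlt : take t.+1 P = rcons (take t P) y by rewrite /y (take_nth x0).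
have HpQ : path e (F r') Q.
  by move: Hp; rewrite HP cat_path Hlt last_rcons HFy => /andP [].
have HlQ : last (F r') Q = F r by rewrite -Hl HFy {1}HP last_cat Hlt last_rcons.
have HuQ : uniq (F r' :: Q) by rewrite HFy /y -drop_nth // drop_uniq.
have HsQ : size Q = n - t.+1 by rewrite size_drop Hs.
have Hlt2 : n - t.+1 < n by rewrite -Hs; clear -Ht; lia.
have := IH (n - t.+1) Hlt2 r' r Q HsQ Hr' Hr HpQ HlQ HuQ.
have := dC_tri Hq Hr' Hr; move: Hcase; rewrite -Hs; clear -Ht; lia.
Qed.

Hypothesis econ : connected_graph e.

Lemma dist_F i j : i < g -> j < g -> dist e (F i) (F j) = dC i j.
Proof.
move=> Hi Hj; apply/eqP; rewrite eqn_leq; apply/andP; split; last first.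
  have [P [Hp Hl Hu Hs]] := dist_path econ (F i) (F j).
  by apply: (lower Hs).
rewrite dC_fwd // leq_min; apply/andP; split.
  rewrite -(size_arcs i (fwd i j)); apply: dist_le.
    by apply: arcs_path; have := fwd_lt Hi Hj; lia.
  by rewrite arcs_last F_fwd.
rewrite dist_sym // -(size_arcs j (fwd j i)); apply: dist_le.
  by apply: arcs_path; have := fwd_lt Hj Hi; lia.
by rewrite arcs_last F_fwd.
Qed.

End Cyc.

Lemma pair_res g i j m : 3 <= g -> i < g -> j < g -> m.+1 < g ->
  minn (adist i m) (g - adist i m) = minn (adist j m) (g - adist j m) ->
  minn (adist i m.+1) (g - adist i m.+1) = minn (adist j m.+1) (g - adist j m.+1) -> i = j.
Proof. rewrite /adist => *; lia. Qed.

Lemma case2_arith g i : 3 <= g -> i < g -> minn (adist i 0) (g - adist i 0) = 2 ->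
  2 <= minn (adist i 1) (g - adist i 1) -> i = g - 2 /\ 5 <= g.
Proof. rewrite /adist => *; lia. Qed.

Lemma half_facts g : 3 <= g ->
  [/\ 0 < g./2, g./2 < g, g./2 + g./2 <= g & g <= g./2 + g./2 + 1].
Proof.
move=> H; have := odd_double_half g; rewrite -addnn.
move: (g./2) => k.
case: (odd g) => /= Hk; split; lia.
Qed.

Lemma case1_arith g i k : k + k <= g -> g <= k + k + 1 ->
  minn (adist i k) (g - adist i k) <= minn (adist 0 k) (g - adist 0 k).
Proof. rewrite /adist => *; lia. Qed.

Section Main.
Variables (T : finType) (e : rel T).
Hypothesis esym : symmetric e.
Hypothesis eirr : irreflexive e.
Hypothesis econ : connected_graph e.

Lemma dist1_edge u w : dist e u w = 1 -> e u w.
Proof.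
move=> H1; have [P [Hp Hl _ Hs]] := dist_path econ u w.
rewrite H1 in Hs; case: P Hp Hl Hs => [|p P] //=; case: P => [|q P] //=.
by rewrite andbT => Hp <-.
Qed.

Lemma path_avoid v z P : path e z P -> v \notin z :: P ->
  path [rel a b | [&& e a b, a != v & b != v]] z P.
Proof.
elim: P z => [//|y P IH] z /= /andP [Hzy Hp]; rewrite !inE negb_or => /andP [Hz].
rewrite negb_or => /andP [Hy HP] /=.
rewrite Hzy eq_sym Hz eq_sym Hy /=; apply: IH => //.
by rewrite inE negb_or Hy.
Qed.

Variables (x0 : T) (c : seq T).
Hypothesis cuniq : uniq c.
Hypothesis ccyc : cycle e c.
Hypothesis cge3 : 3 <= size c.
Hypothesis cmin : forall k, cycle_of_len e k -> size c <= k.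
Notation g := (size c).

Lemma distC i j : i < g -> j < g -> dist e (nth x0 c i) (nth x0 c j) = dC c i j.
Proof. by move=> Hi Hj; rewrite -(Fi x0 Hi) -(Fi x0 Hj); apply: dist_F. Qed.

Lemma edgeC i : i.+1 < g -> e (nth x0 c i) (nth x0 c i.+1).
Proof. exact: edge_nth. Qed.

Lemma edge_lastC : e (nth x0 c g.-1) (nth x0 c 0).
Proof. exact: edge_last. Qed.

Lemma nth_inj i j : i < g -> j < g -> nth x0 c i = nth x0 c j -> i = j.
Proof. by move=> Hi Hj H; apply/eqP; rewrite -(nth_uniq x0 Hi Hj cuniq) H. Qed.

Lemma finish (x : T) (m : nat) : m.+1 < g -> x \notin c ->
  (forall y, y \in c -> y != nth x0 c m -> y != nth x0 c m.+1 ->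
    exists2 w, w \notin x |: ([set y in c] :\ nth x0 c m :\ nth x0 c m.+1)
             & dist e x w != dist e y w) ->
  exists W : {set T}, resolving e W /\ #|W| = #|T| - g + 1.
Proof.
move=> Hm Hxc Hres.
set a := nth x0 c m; set b := nth x0 c m.+1.
set S := [set y in c] :\ a :\ b.
set U := x |: S.
have Ha : a \in c by apply: mem_nth; apply: ltnW.
have Hb : b \in c by apply: mem_nth.
have Hab : b != a by apply/negP => /eqP /nth_inj; move/(_ Hm ltac:(lia)); lia.
exists (~: U); split; last first.
  have HS0 : #|[set y in c]| = g by rewrite cardsE; apply/card_uniqP.
  have HgT : g <= #|T| by rewrite -HS0 max_card.
  have HS : #|S| = g - 2.
    move: (cardsD1 a [set y in c]) (cardsD1 b ([set y in c] :\ a)).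
    rewrite /S !inE Ha Hb Hab HS0 /=; lia.
  have HU : #|U| = g - 1.
    rewrite /U cardsU1 HS /S !inE (negPf Hxc) !andbF /=; lia.
  move: (cardsC U); rewrite HU; lia.
have HaU : a \notin U.
  by rewrite /U /S !inE eqxx /= andbF orbF; apply/negP => /eqP Hxa; move: Hxc; rewrite -Hxa Ha.
have HbU : b \notin U.
  by rewrite /U /S !inE eqxx /= orbF; apply/negP => /eqP Hxb; move: Hxc; rewrite -Hxb Hb.
have HinU : forall u, u \in U -> u = x \/ [/\ u \in c, u != a & u != b].
  move=> u; rewrite /U /S !inE => /orP [/eqP -> | /and3P [H1 H2 H3]]; first by left.
  by right.
apply/forallP => u; apply/forallP => w; apply/implyP => Huw; apply/existsP.
have Hne0 : forall p q, p != q -> dist e q p != 0.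
  move=> p q Hpq; apply/negP => /eqP /(dist0 econ) Hqp; by move: Hpq; rewrite Hqp eqxx.
case Hu : (u \in U); last first.
  by exists u; rewrite in_setC Hu dist_xx eq_sym Hne0.
case Hw : (w \in U); last first.
  by exists w; rewrite in_setC Hw dist_xx Hne0 // eq_sym.
have [Hux|[Hu1 Hu2 Hu3]] := HinU u Hu.
  rewrite Hux in Huw *.
  have [Hwx|[Hw1 Hw2 Hw3]] := HinU w Hw; first by move: Huw; rewrite Hwx eqxx.
  by have [z Hz1 Hz2] := Hres w Hw1 Hw2 Hw3; exists z; rewrite in_setC Hz1 Hz2.
have [Hwx|[Hw1 Hw2 Hw3]] := HinU w Hw.
  have [z Hz1 Hz2] := Hres u Hu1 Hu2 Hu3; exists z.
  by rewrite in_setC Hz1 Hwx eq_sym Hz2.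
case Ea : (dist e u a == dist e w a); last by exists a; rewrite in_setC HaU Ea.
case Eb : (dist e u b == dist e w b); last by exists b; rewrite in_setC HbU Eb.
exfalso; move: Huw Ea Eb.
rewrite -(nth_index x0 Hu1) -(nth_index x0 Hw1).
have Hi : index u c < g by rewrite index_mem.
have Hj : index w c < g by rewrite index_mem.
have Hm0 : m < g by apply: ltnW.
rewrite /a /b !distC //.
move=> Hne /eqP Ea /eqP Eb; move: Hne.
by rewrite (pair_res cge3 Hi Hj Hm Ea Eb) eqxx.
Qed.

Lemma main v (Hcut : cut_vertex e v)
  (Hpos : v = nth x0 c 0 \/ (v \notin c /\ (has (e v) c -> e v (nth x0 c 0)))) :
  exists W : {set T}, resolving e W /\ #|W| = #|T| - g + 1.
Proof.
set H := [rel a b | [&& e a b, a != v & b != v]].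
have Hsym : connect_sym H.
  apply: sym_connect_sym => a b /=; rewrite esym; by case: (a != v); case: (b != v); rewrite /= ?andbT ?andbF.
have Hnv : forall i, 0 < i < g -> nth x0 c i != v.
  move=> i /andP [Hi0 Hi]; case: Hpos => [-> | [Hv _]].
    by apply/negP => /eqP Hiv; have := @nth_inj i 0 Hi ltac:(lia) Hiv; lia.
  by apply/negP => /eqP Hiv; move: Hv; rewrite -Hiv mem_nth.
set cst := nth x0 c 1.
have Hc1 : forall i, 0 < i < g -> connect H cst (nth x0 c i).
  elim => [//|i IH] /andP [_ Hi].
  case: i IH Hi => [_ _|i IH Hi]; first exact: connect0.
  apply: connect_trans (IH _) _; first by lia.
  apply: connect1 => /=; rewrite edgeC // !Hnv //; lia.
have Hcv : forall y, y \in c -> y != v -> connect H cst y.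
  move=> y Hy Hyv; rewrite -(nth_index x0 Hy).
  have Hi : index y c < g by rewrite index_mem.
  case Hi0 : (index y c) => [|i].
    rewrite Hsym; apply: connect1 => /=.
    rewrite edgeC; last by lia.
    rewrite -Hi0 nth_index // Hyv /= Hnv //; lia.
  by apply: Hc1; rewrite -Hi0 Hi; lia.
have [x1 [y1 [Hx1 Hy1 Hxy1]]] := Hcut.
have [z [Hzv Hzc]] : exists z, z != v /\ ~~ connect H z cst.
  case Hx1c : (connect H x1 cst); last by exists x1; rewrite Hx1c.
  exists y1; split => //; apply/negP => Hy1c; move/negP: Hxy1; apply.
  by apply: connect_trans Hx1c _; rewrite Hsym.
have [P [HP HlP HuP _]] := dist_path econ z v.
case/lastP: P HP HlP HuP => [|P' xv] HP HlP HuP.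
  by move: Hzv; rewrite -HlP /= eqxx.
rewrite last_rcons in HlP; subst xv.
set x := last z P'.
move: HP; rewrite rcons_path => /andP [HP' Hxv].
have Hvn : v \notin z :: P' by move: HuP; rewrite -rcons_cons rcons_uniq => /andP [].
have HzxH : connect H z x := path_connect (path_avoid HP' Hvn) (mem_last z P').
have Hxnv : x != v by apply/negP => /eqP Hx; move: Hvn; rewrite -Hx mem_last.
have HxC : forall y, y \in c -> y != v -> ~~ connect H x y.
  move=> y Hy Hyv; apply/negP => Hxy; move/negP: Hzc; apply.
  apply: connect_trans HzxH (connect_trans Hxy _); rewrite Hsym; exact: Hcv.
have Hxnc : x \notin c.
  by apply/negP => Hx; have := HxC x Hx Hxnv; rewrite connect0.
have Hdx : forall w, w \in c -> w != v -> (dist e v w).+1 <= dist e x w.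
  move=> w Hw Hwv.
  have [Q [HQ HlQ HuQ HsQ]] := dist_path econ x w.
  have HvQ : v \in Q.
    apply/negPn/negP => HvQ.
    have Hv' : v \notin x :: Q by rewrite inE negb_or eq_sym Hxnv.
    have := path_connect (path_avoid HQ Hv') (mem_last x Q); rewrite HlQ.
    by move=> Hc; move: (HxC w Hw Hwv); rewrite Hc.
  case/splitPr: HvQ HQ HlQ HsQ => Q1 Q2 HQ HlQ HsQ.
  rewrite -HsQ size_cat /=.
  have : dist e v w <= size Q2.
    apply: dist_le; first by move: HQ; rewrite cat_path /= => /and3P [].
    by move: HlQ; rewrite last_cat.
  by move=> H2; rewrite addnS ltnS; apply: leq_trans H2 (leq_addl _ _).
have Hdxv : dist e x v = 1.
  apply/eqP; rewrite eqn_leq dist_edge //= lt0n; apply/negP => /eqP /(dist0 econ) Hxv'.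
  by move: Hxnv; rewrite Hxv' eqxx.
have H0g : 0 < g by apply: leq_trans cge3.
have H1g : 1 < g by apply: leq_trans cge3.
case: Hpos => [Hv0 | [Hvc Hhas]].
  have [Hk1 Hkg Hk2 Hk3] := half_facts cge3.
  set k := g./2 in Hk1 Hkg Hk2 Hk3 *.
  apply: (@finish x k.-1); first by rewrite prednK.
    exact: Hxnc.
  rewrite prednK // => y Hy _ Hyb.
  exists (nth x0 c k).
    rewrite !inE eqxx /= orbF; apply/negP => /eqP Hxk; move: Hxnc; rewrite -Hxk mem_nth //.
  have Hbv : nth x0 c k != v.
    rewrite Hv0; apply/negP => /eqP /nth_inj; move/(_ Hkg H0g) => Hk0.
    by move: Hk1; rewrite Hk0.
  have := Hdx _ (mem_nth x0 Hkg) Hbv.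
  rewrite Hv0 distC //.
  rewrite -(nth_index x0 Hy) distC ?index_mem //.
  have := case1_arith (index y c) Hk2 Hk3.
  rewrite /dC => H1 H2; apply/negP => /eqP H3; move: H1 H2; rewrite H3.
  move=> H1 H2; have := leq_ltn_trans H1 H2; by rewrite ltnn.
apply: (@finish x 0) => //.
move=> y Hy Hya Hyb.
have HvU : v \notin x |: ([set y0 in c] :\ nth x0 c 0 :\ nth x0 c 1).
  by rewrite !inE (negPf Hvc) !andbF orbF eq_sym.
case Hyv : (dist e y v == 1); last first.
  by exists v => //; rewrite Hdxv eq_sym Hyv.
move/eqP: Hyv => Hyv.
have Heyv : e y v by apply: dist1_edge.
have Heva : e v (nth x0 c 0) by apply: Hhas; apply/hasP; exists y => //; rewrite esym.
set a := nth x0 c 0; set b := nth x0 c 1.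
have Ha : a \in c by apply: mem_nth.
have Hb : b \in c by apply: mem_nth.
have Hav : a != v by apply/negP => /eqP Hav; move: Hvc; rewrite -Hav Ha.
have Hbv : b != v by apply/negP => /eqP Hbv; move: Hvc; rewrite -Hbv Hb.
have Hva : dist e v a = 1.
  apply/eqP; rewrite eqn_leq dist_edge //= lt0n; apply/negP => /eqP /(dist0 econ) Hva.
  by move: Hav; rewrite Hva eqxx.
have Hxa := Hdx a Ha Hav; rewrite Hva in Hxa.
have Hyad : dist e y a <= 2 by have := dist_tri econ y v a; rewrite Hyv Hva.
have HaU : a \notin x |: ([set y0 in c] :\ a :\ b).
  by rewrite !inE eqxx /= andbF orbF; apply/negP => /eqP Hxa'; move: Hxnc; rewrite -Hxa' Ha.
have HbU : b \notin x |: ([set y0 in c] :\ a :\ b).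
  by rewrite !inE eqxx /= orbF; apply/negP => /eqP Hxb; move: Hxnc; rewrite -Hxb Hb.
case Ea : (dist e x a == dist e y a); last by exists a => //; rewrite Ea.
move/eqP: Ea => Ea.
have Hvb : 0 < dist e v b.
  rewrite lt0n; apply/negP => /eqP /(dist0 econ) Hvb; by move: Hbv; rewrite Hvb eqxx.
have Hxb := Hdx b Hb Hbv.
case Eb : (dist e x b == dist e y b); last by exists b => //; rewrite Eb.
move/eqP: Eb => Eb.
exfalso.
have Hi : index y c < g by rewrite index_mem.
have Hy2 : dist e y a = 2 by rewrite -Ea; apply/eqP; rewrite eqn_leq Hxa Ea Hyad.
have Hyb2 : 2 <= dist e y b by rewrite -Eb; apply: leq_trans Hxb.
move: Hy2 Hyb2; rewrite -(nth_index x0 Hy) /a /b !distC // => Hy2 Hyb2.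
have [Hi2 Hg5] := case2_arith cge3 Hi Hy2 Hyb2.
set y' := nth x0 c (index y c).
have Hy' : y' = nth x0 c (g - 2) by rewrite /y' Hi2.
have Hg2 : g - 2 < g by move: H0g; clear; lia.
have Hg1 : g.-1 < g by rewrite prednK.
have Hgg : g.-1 = (g - 2).+1 by move: Hg5; clear; lia.
have Hdiff : forall i j, i < g -> j < g -> i != j -> nth x0 c i != nth x0 c j.
  by move=> i j Hi' Hj' Hij; apply/negP => /eqP /nth_inj; move/(_ Hi' Hj') => E; move: Hij; rewrite E eqxx.
have Hnotv : forall i, i < g -> nth x0 c i != v.
  by move=> i Hi'; apply/negP => /eqP E; move: Hvc; rewrite -E mem_nth.
have : cycle_of_len e 4.
  have Hs : size [:: a; v; y'; nth x0 c g.-1] == 4 by [].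
  apply/existsP; exists (Tuple Hs); apply/and3P; split => //=.
  - rewrite !inE !negb_or /a Hy' !(eq_sym v) !Hnotv // !Hdiff //;
      move: Hg5; clear; lia.
  - have Heyv' : e y' v by rewrite /y' nth_index.
    rewrite esym Heva /= esym Heyv' /= Hy' Hgg edgeC /=; last by rewrite -Hgg.
    by rewrite ?andbT; have := edge_lastC; rewrite Hgg.
move/cmin => H4; move: H4 Hg5; clear; lia.
Qed.

End Main.
Unset Implicit Arguments.

Theorem proposition2p4 (T : finType) (e : rel T) :
  simple_graph e -> connected_graph e -> has_cycle e ->
  metric_dim e = #|T| - girth e + 2 ->
  forall v : T, ~ cut_vertex e v.
Proof.
move=> [esym eirr] econ [k0 Hk0] Hmd v Hcut.
have Hkle : forall k, cycle_of_len e k -> k < #|T|.+1.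
  move=> k /existsP [t /and3P [_ Hu _]]; rewrite ltnS -(size_tuple t).
  by move/card_uniqP: Hu => <-; apply: max_card.
have [kk Hkk Hg] : exists2 kk : 'I_#|T|.+1, cycle_of_len e kk & girth e = kk.
  apply: bigmin_attained; first by exists (Ordinal (Hkle _ Hk0)).
  by move=> i _; apply: ltnW.
have Hmin : forall k, cycle_of_len e k -> girth e <= k.
  move=> k Hk; exact: (@bigmin_le _ (fun k : 'I_#|T|.+1 => cycle_of_len e k)
     (fun k => val k) #|T|.+1 (Ordinal (Hkle _ Hk))).
have Hkk' := Hkk; case/existsP: Hkk' => t /and3P [H3 Hu Hc].
set c0 := val t.
have Hs0 : size c0 = girth e by rewrite Hg size_tuple.
set s := if v \in c0 then index v c0 else find (e v) c0.
set c := rot s c0.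
have Hcu : uniq c by rewrite rot_uniq.
have Hcc : cycle e c by rewrite rot_cycle.
have Hcs : size c = girth e by rewrite size_rot.
have Hc3 : 3 <= size c by rewrite Hcs Hg.
have Hcm : forall k, cycle_of_len e k -> size c <= k by move=> k; rewrite Hcs; apply: Hmin.
have Hnth : s < size c0 -> nth v c 0 = nth v c0 s.
  move=> Hs; rewrite /c /rot nth_cat size_drop subn_gt0 Hs nth_drop addn0 //.
have Hpos : v = nth v c 0 \/ (v \notin c /\ (has (e v) c -> e v (nth v c 0))).
  case Hv : (v \in c0).
    left; rewrite Hnth /s Hv ?nth_index // index_mem //.
  right; split; first by rewrite mem_rot Hv.
  rewrite has_rot => Hh; rewrite Hnth /s Hv; last by rewrite -has_find.
  exact: nth_find.
have [W [HW HWc]] := main esym econ Hcu Hcc Hc3 Hcm Hcut Hpos.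
have Hle : metric_dim e <= #|W|.
  exact: (@bigmin_le _ (fun W : {set T} => resolving e W) (fun W => #|W|) #|T| W).
have HgT : girth e <= #|T| by rewrite -ltnS Hg.
move: Hle; rewrite Hmd HWc Hcs; move: HgT; clear; lia.
Qed.
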